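(* Let $n\ge 2$. The center $Z(Q_n)$ of $Q_n$ equals $\mathbb{C}\cdot 1$ if $3\nmid n$, and if $3\mid n$ it is $4$-dimensional with basis $1,U,V,UV$, where $U=\prod_{1\le i\le n-1,\,3\nmid i}u_i$ and $V=\prod_{1\le i\le n-1,\,3\nmid i}v_i$.
   Context: $Q_n$ is the $\mathbb{C}$-algebra with generators $u_1,v_1,\dots,u_{n-1},v_{n-1}$ and relations (G1) $u_i^2=v_i^2=-1$; (G2) $[u_i,v_j]=-1$ if $|i-j|\le1$ (including $i=j$); (G3) $[u_i,v_j]=1$ if $|i-j|\ge2$; (G4) $[u_i,u_j]=[v_i,v_j]=1$, with $[a,b]=aba^{-1}b^{-1}$. *)

(* Defs.v *)
From HB Require Import structures.
From mathcomp Require Import all_boot all_order all_algebra.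
Set Implicit Arguments. Unset Strict Implicit. Unset Printing Implicit Defensive.
Import Order.TTheory GRing.Theory Num.Theory.
Local Open Scope ring_scope.

Definition inQ (n i : nat) : bool := (1 <= i < n)%N.

(* Since u_i^2 = v_i^2 = -1, all generators are invertible, and
   [a,b] = a b a^-1 b^-1 = c  (c = +-1 central)  is written  a b = c (b a). *)
Definition Qrel (R : pzRingType) (n : nat) (u v : nat -> R) : Prop :=
  [/\ forall i, inQ n i -> u i * u i = -1 /\ v i * v i = -1,
      forall i j, inQ n i -> inQ n j ->
          u i * v j = (if (i <= j.+1)%N && (j <= i.+1)%N then - (v j * u i)
                       else v j * u i)
    & forall i j, inQ n i -> inQ n j ->
          u i * u j = u j * u i /\ v i * v j = v j * v i].

(* (A, u, v) is the C-algebra Q_n presented by generators u_i, v_i and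
   relations (G1)-(G4): it satisfies the relations and is universal
   (initial) among C-algebras with such elements. *)
Definition is_Qn (C : fieldType) (n : nat) (A : algType C) (u v : nat -> A) : Prop :=
  Qrel n u v /\
  forall (B : algType C) (x y : nat -> B), Qrel n x y ->
    (exists f : {lrmorphism A -> B},
        forall i, inQ n i -> f (u i) = x i /\ f (v i) = y i) /\
    (forall f g : {lrmorphism A -> B},
        (forall i, inQ n i -> f (u i) = g (u i) /\ f (v i) = g (v i)) ->
        f =1 g).

Definition central (R : pzRingType) (z : R) : Prop := forall a : R, z * a = a * z.

Definition Uprod (R : pzRingType) (n : nat) (u : nat -> R) : R :=
  \prod_(1 <= i < n | ~~ (3 %| i)%N) u i.

(* Main.v *)
Require Import Defs.
From HB Require Import structures.
From mathcomp Require Import all_boot all_order all_algebra.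
From Stdlib Require Import ClassicalEpsilon Lia.
Set Implicit Arguments. Unset Strict Implicit. Unset Printing Implicit Defensive.
Import Order.TTheory GRing.Theory Num.Theory.
Local Open Scope ring_scope.

Definition sgn (R : pzRingType) (b : bool) (x : R) : R := if b then - x else x.

Lemma sgnK (R : pzRingType) b c (x : R) : sgn b (sgn c x) = sgn (b (+) c) x.
Proof. by case: b; case: c; rewrite /sgn /= ?opprK. Qed.
Lemma sgnMl (R : pzRingType) b (x y : R) : sgn b x * y = sgn b (x * y).
Proof. by case: b; rewrite /sgn ?mulNr. Qed.
Lemma sgnMr (R : pzRingType) b (x y : R) : x * sgn b y = sgn b (x * y).
Proof. by case: b; rewrite /sgn ?mulrN. Qed.
Lemma sgn_sym (R : pzRingType) b (x y : R) : x = sgn b y -> y = sgn b x.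
Proof. by case: b; rewrite /sgn => -> //; rewrite opprK. Qed.

Lemma comm_prod_sgn (R : pzRingType) (I : eqType) (r : seq I) (P : pred I) (F : I -> R)
  (s : I -> bool) (x : R) :
  (forall j, j \in r -> x * F j = sgn (s j) (F j * x)) ->
  x * (\prod_(j <- r | P j) F j)
  = sgn (\big[addb/false]_(j <- r | P j) s j) ((\prod_(j <- r | P j) F j) * x).
Proof.
elim: r => [|j r IH] H; first by rewrite !big_nil mul1r mulr1.
rewrite !big_cons; case: (P j); last by apply: IH => k kr; apply: H; rewrite inE kr orbT.
rewrite mulrA H ?mem_head // sgnMl -mulrA IH; last by move=> k kr; apply: H; rewrite inE kr orbT.
by rewrite sgnMr sgnK mulrA.
Qed.

Lemma prod_insert (R : pzRingType) (I : eqType) (r : seq I) (P : pred I) (F : I -> R) (i : I) :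
  uniq r -> i \in r -> ~~ P i ->
  (forall j, j \in r -> F i * F j = F j * F i) ->
  \prod_(j <- r | P j || (j == i)) F j = F i * \prod_(j <- r | P j) F j.
Proof.
elim: r => [|j r IH] //= /andP[jr ur] ir Pi Hc.
rewrite !big_cons; have [eji|nji] := eqVneq j i.
  subst j; rewrite orbT (negbTE Pi); congr (_ * _).
  rewrite [LHS]big_seq_cond [RHS]big_seq_cond; apply: eq_bigl => k; case: (boolP (k \in r)) => kr //=.
  by case: eqP => [ek|]; [move: jr; rewrite -ek kr | rewrite orbF].
have ir' : i \in r by move: ir; rewrite inE => /orP[/eqP eij|//]; rewrite eij eqxx in nji.
rewrite orbF; case: (P j); rewrite IH //; try by move=> k kr; apply: Hc; rewrite inE kr orbT.
by rewrite !mulrA Hc ?mem_head.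
Qed.

Lemma big_xor_pred1 (I : eqType) (r : seq I) (k : I) (c : I -> bool) :
  uniq r -> \big[addb/false]_(j <- r) ((j == k) && c j) = (k \in r) && c k.
Proof.
elim: r => [|j r IH]; first by rewrite big_nil.
move=> /= /andP[jr ur]; rewrite big_cons IH // inE (eq_sym k).
have [ejk|] := eqP; last by [].
rewrite -ejk (negbTE jr) /= addbF; by case: (c j).
Qed.

Definition st n := {ffun 'I_n -> bool}.
Definition get n (a : st n) (k : nat) : bool := if insub k is Some i then a i else false.
Definition flip n (a : st n) (j : nat) : st n := [ffun k : 'I_n => a k (+) (val k == j)].
Definition zst n : st n := [ffun _ => false].

Lemma get_flip n (a : st n) j k : (j < n)%N -> get (flip a j) k = get a k (+) (k == j).
Proof.
move=> jn; rewrite /get; case: insubP => [i _ ik|].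
  by rewrite ffunE ik.
by case: eqP => // -> ; rewrite jn.
Qed.

Lemma get_ge n (a : st n) k : (n <= k)%N -> get a k = false.
Proof. by move=> kn; rewrite /get insubF // ltnNge kn. Qed.

Lemma get_zst n k : get (zst n) k = false.
Proof. by rewrite /get; case: insubP => // i _ _; rewrite ffunE. Qed.

Lemma st_eq n (a b : st n) : (forall k, get a k = get b k) -> a = b.
Proof.
move=> H; apply/ffunP => i; move: (H i); rewrite /get.
by rewrite (insubT (fun k => k < n)%N (ltn_ord i)) /=; rewrite (_ : Sub _ _ = i) //; apply: val_inj.
Qed.

Definition near (i j : nat) : bool := (i <= j.+1)%N && (j <= i.+1)%N.
Lemma nearC i j : near i j = near j i. Proof. by rewrite /near andbC. Qed.

Definition Up (R : pzRingType) n (u : nat -> R) (a : st n) : R :=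
  \prod_(1 <= i < n | get a i) u i.
Definition mono (R : pzRingType) n (u v : nat -> R) (t : st n * st n) : R :=
  Up u t.1 * Up v t.2.
Definition xorr n (a : st n) (i : nat) : bool :=
  \big[addb/false]_(1 <= j < n | get a j) near i j.

Section Arel.
End Arel.

Lemma Qrel_uv (R : pzRingType) n (u v : nat -> R) i j : Qrel n u v -> inQ n i -> inQ n j ->
  u i * v j = sgn (near i j) (v j * u i).
Proof. by case=> _ H _ hi hj; rewrite H. Qed.

Lemma Qrel_vu (R : pzRingType) n (u v : nat -> R) i j : Qrel n u v -> inQ n i -> inQ n j ->
  v j * u i = sgn (near i j) (u i * v j).
Proof. by move=> Q hi hj; rewrite (Qrel_uv Q hi hj) sgnK addbb. Qed.

Lemma inQ_iota n j : j \in index_iota 1 n -> inQ n j.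
Proof. by rewrite mem_index_iota. Qed.

Lemma xor_false (I : Type) (r : seq I) (P : pred I) : \big[addb/false]_(j <- r | P j) false = false.
Proof. by rewrite big1_eq. Qed.

Lemma u_Up (R : pzRingType) n (u v : nat -> R) i (a : st n) : Qrel n u v -> inQ n i ->
  u i * Up u a = Up u a * u i.
Proof.
move=> Q hi; rewrite /Up (@comm_prod_sgn _ _ _ _ _ (fun _ => false)) ?xor_false //.
by move=> j /inQ_iota hj; case: Q => _ _ H; case: (H i j hi hj).
Qed.

Lemma v_Vp (R : pzRingType) n (u v : nat -> R) i (a : st n) : Qrel n u v -> inQ n i ->
  v i * Up v a = Up v a * v i.
Proof.
move=> Q hi; rewrite /Up (@comm_prod_sgn _ _ _ _ _ (fun _ => false)) ?xor_false //.
by move=> j /inQ_iota hj; case: Q => _ _ H; case: (H i j hi hj).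
Qed.

Lemma u_Vp (R : pzRingType) n (u v : nat -> R) i (b : st n) : Qrel n u v -> inQ n i ->
  u i * Up v b = sgn (xorr b i) (Up v b * u i).
Proof.
move=> Q hi; rewrite /Up (@comm_prod_sgn _ _ _ _ _ (fun j => near i j)) //.
by move=> j /inQ_iota hj; exact: (Qrel_uv Q hi hj).
Qed.

Lemma v_Up (R : pzRingType) n (u v : nat -> R) i (a : st n) : Qrel n u v -> inQ n i ->
  v i * Up u a = sgn (xorr a i) (Up u a * v i).
Proof.
move=> Q hi; rewrite /Up (@comm_prod_sgn _ _ _ _ _ (fun j => near i j)) //.
by move=> j /inQ_iota hj; rewrite nearC; exact: (Qrel_vu Q hj hi).
Qed.

Lemma Up_flip (R : pzRingType) n (u : nat -> R) i (a : st n) :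
  (forall j k, inQ n j -> inQ n k -> u j * u k = u k * u j) ->
  (forall j, inQ n j -> u j * u j = -1) -> inQ n i ->
  u i * Up u a = sgn (get a i) (Up u (flip a i)).
Proof.
move=> Hc H1 hi; have iln : (i < n)%N by case/andP: hi.
have ur : uniq (index_iota 1 n) by rewrite /index_iota iota_uniq.
have ir : i \in index_iota 1 n by rewrite mem_index_iota.
case Ha: (get a i); rewrite /sgn /Up.
  rewrite (@eq_bigl _ _ _ _ _ (fun j => get a j) (fun j => get (flip a i) j || (j == i))).
    rewrite prod_insert // ?get_flip // ?Ha ?eqxx //.
      by rewrite mulrA H1 // mulN1r.
    by move=> j /inQ_iota hj; apply: Hc.
  by move=> j; rewrite get_flip //; case: eqP => [->|]; rewrite ?Ha ?orbT ?addbF ?orbF.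
rewrite (@eq_bigl _ _ _ _ _ (fun j => get (flip a i) j) (fun j => get a j || (j == i))).
  rewrite prod_insert // ?Ha //.
  by move=> j /inQ_iota hj; apply: Hc.
by move=> j; rewrite get_flip //; case: eqP => [->|]; rewrite ?Ha ?orbT ?addbF ?orbF.
Qed.

Lemma Qrel_uu (R : pzRingType) n (u v : nat -> R) : Qrel n u v ->
  (forall j k, inQ n j -> inQ n k -> u j * u k = u k * u j) /\
  (forall j, inQ n j -> u j * u j = -1) /\
  (forall j k, inQ n j -> inQ n k -> v j * v k = v k * v j) /\
  (forall j, inQ n j -> v j * v j = -1).
Proof.
case=> H1 _ H4; split; first by move=> j k hj hk; case: (H4 j k hj hk).
split; first by move=> j hj; case: (H1 j hj).
split; first by move=> j k hj hk; case: (H4 j k hj hk).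
by move=> j hj; case: (H1 j hj).
Qed.

Lemma u_mono (R : pzRingType) n (u v : nat -> R) i (t : st n * st n) : Qrel n u v -> inQ n i ->
  u i * mono u v t = sgn (get t.1 i) (mono u v (flip t.1 i, t.2)).
Proof.
move=> Q hi; case: (Qrel_uu Q) => Hc [H1 _].
by rewrite /mono mulrA Up_flip // sgnMl.
Qed.

Lemma v_mono (R : pzRingType) n (u v : nat -> R) i (t : st n * st n) : Qrel n u v -> inQ n i ->
  v i * mono u v t = sgn (xorr t.1 i (+) get t.2 i) (mono u v (t.1, flip t.2 i)).
Proof.
move=> Q hi; case: (Qrel_uu Q) => _ [_ [Hc H1]].
by rewrite /mono mulrA v_Up // sgnMl -mulrA Up_flip // sgnMr sgnK.
Qed.

Lemma u_mono_c (R : pzRingType) n (u v : nat -> R) i (t : st n * st n) : Qrel n u v -> inQ n i ->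
  u i * mono u v t = sgn (xorr t.2 i) (mono u v t * u i).
Proof.
move=> Q hi; rewrite /mono mulrA (u_Up _ Q hi) -mulrA (u_Vp _ Q hi) sgnMr mulrA //.
Qed.

Lemma v_mono_c (R : pzRingType) n (u v : nat -> R) i (t : st n * st n) : Qrel n u v -> inQ n i ->
  v i * mono u v t = sgn (xorr t.1 i) (mono u v t * v i).
Proof.
move=> Q hi; rewrite /mono mulrA (v_Up _ Q hi) sgnMl -!mulrA (v_Vp _ Q hi) //.
Qed.

Lemma near_split i j : (1 <= i)%N ->
  near i j = (j == i.-1) (+) (j == i) (+) (j == i.+1).
Proof.
rewrite /near => /ssrnat.leP hi.
do 2 case: ssrnat.leP; do 3 case: eqP; intros; simpl; try lia; try reflexivity.
Qed.

Lemma mod3 k : ~~ (3 %| k.+2)%N = ~~ (3 %| k)%N (+) ~~ (3 %| k.+1)%N.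
Proof.
have := @ltn_pmod k 3 isT; rewrite /dvdn.
set r := (k %% 3)%N. rewrite (divn_eq k 3) -/r -!addnS !modnMDl.
by case: r => [|[|[|]]].
Qed.

Definition wf n (a : st n) (k : nat) : bool := (1 <= k)%N && get a k.

Lemma xorr_w n (a : st n) i : inQ n i ->
  xorr a i = wf a i.-1 (+) wf a i (+) wf a i.+1.
Proof.
case/andP=> i1 iln; rewrite /xorr big_mkcond /=.
rewrite (eq_bigr (fun j => ((j == i.-1) && get a j) (+) ((j == i) && get a j) (+) ((j == i.+1) && get a j))); last first.
  by move=> j _; rewrite near_split //; case: (get a j); case: (j == _); case: (j == _); case: (j == _).
have ur : uniq (index_iota 1 n) by rewrite /index_iota iota_uniq.
rewrite !big_split /= !big_xor_pred1 // !mem_index_iota /wf.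
rewrite i1 iln (leq_ltn_trans (leq_pred i) iln) /= ?andbT.
case: (ltnP i.+1 n) => h; first by rewrite andTb.
by rewrite (get_ge a h) andbF.
Qed.

Lemma recur (w : nat -> bool) n : w 0 = false ->
  (forall i, (1 <= i)%N -> (i < n)%N -> w i.+1 = w i.-1 (+) w i) ->
  forall k, (k.+1 <= n)%N -> w k = w 1%N && ~~ (3 %| k)%N /\ w k.+1 = w 1%N && ~~ (3 %| k.+1)%N.
Proof.
move=> w0 H; elim=> [|k IH] kn; first by split; [rewrite w0 /= andbF | rewrite /= andbT].
have [h1 h2] := IH (ltnW kn); split => //.
rewrite (H k.+1) // /= h1 h2 mod3; by case: (w 1%N); case: (3 %| k)%N; case: (3 %| k.+1)%N.
Qed.

Lemma rad_state n (a : st n) : (2 <= n)%N -> (forall i, inQ n i -> xorr a i = false) ->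
  (forall k, inQ n k -> get a k = get a 1%N && ~~ (3 %| k)%N) /\ (get a 1%N -> (3 %| n)%N).
Proof.
move=> n2 H.
have R := @recur (wf a) n (erefl _).
have R' : forall k, (k.+1 <= n)%N -> wf a k.+1 = wf a 1%N && ~~ (3 %| k.+1)%N.
  move=> k kn; apply: (proj2 (R _ k kn)).
  move=> i i1 iln; have hi : inQ n i by rewrite /inQ i1.
  have := H i hi; rewrite xorr_w //.
  by case: (wf a i.-1); case: (wf a i); case: (wf a i.+1).
have w1 : wf a 1%N = get a 1%N by [].
split.
  move=> [|k] /andP[k1 kn] //; have := R' k (ltnW kn); by rewrite /wf /=.
move=> g1; have n0 : (0 < n)%N by apply: ltnW.
have := R' n.-1; rewrite prednK // => /(_ (leqnn n)); rewrite /wf get_ge // andbF /= g1 /=.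
by move=> /esym /negbFE.
Qed.

Lemma Up_pat (R : pzRingType) n (u : nat -> R) (a : st n) :
  (forall k, inQ n k -> get a k = get a 1%N && ~~ (3 %| k)%N) ->
  Up u a = if get a 1%N then Uprod n u else 1.
Proof.
move=> H; rewrite /Up /Uprod.
have -> : \prod_(1 <= i < n | get a i) u i = \prod_(1 <= i < n | get a 1%N && ~~ (3 %| i)%N) u i.
  by apply: congr_big_nat => // i /andP[i1 iln]; rewrite H // /inQ i1.
case: (get a 1%N) => //=; by rewrite big_pred0.
Qed.

Definition aU n : st n := [ffun k : 'I_n => ~~ (3 %| k)%N].

Lemma get_aU n k : get (aU n) k = (k < n)%N && ~~ (3 %| k)%N.
Proof.
rewrite /get; case: insubP => [i ki ik|]; first by rewrite ffunE ik ki.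
by move=> /negbTE ->.
Qed.

Lemma Up_aU (R : pzRingType) n (u : nat -> R) : Up u (aU n) = Uprod n u.
Proof.
rewrite /Up /Uprod; apply: congr_big_nat => // i /andP[_ iln].
by rewrite get_aU iln.
Qed.

Lemma xorr_aU n i : (3 %| n)%N -> inQ n i -> xorr (aU n) i = false.
Proof.
move=> d3 hi; rewrite xorr_w //; case/andP: hi => i1 iln.
have E : forall k, (k <= n)%N -> wf (aU n) k = ~~ (3 %| k)%N.
  move=> [|k] kn; first by [].
  rewrite /wf get_aU /=; move: kn; rewrite leq_eqVlt => /orP[/eqP->|->] //.
  by rewrite ltnn d3.
rewrite !E ?(leq_trans (leq_pred i)) ?(ltnW iln) //.
case: i i1 iln => [|i] //= _ iln.
by rewrite mod3; case: (3 %| i)%N; case: (3 %| i.+1)%N.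
Qed.

Definition inspan (C : fieldType) (A : algType C) n (u v : nat -> A) (x : A) : Prop :=
  exists c : st n * st n -> C, x = \sum_(t : st n * st n) c t *: mono u v t.

Lemma span0 (C : fieldType) (A : algType C) n (u v : nat -> A) : inspan n u v 0.
Proof. by exists (fun _ => 0); rewrite big1 // => t _; rewrite scale0r. Qed.

Lemma spanD (C : fieldType) (A : algType C) n (u v : nat -> A) x y :
  inspan n u v x -> inspan n u v y -> inspan n u v (x + y).
Proof.
move=> [c ->] [d ->]; exists (fun t => c t + d t).
by rewrite -big_split; apply: eq_bigr => t _; rewrite scalerDl.
Qed.

Lemma spanZ (C : fieldType) (A : algType C) n (u v : nat -> A) (k : C) x :
  inspan n u v x -> inspan n u v (k *: x).
Proof.
move=> [c ->]; exists (fun t => k * c t).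
by rewrite scaler_sumr; apply: eq_bigr => t _; rewrite scalerA.
Qed.

Lemma span_mono (C : fieldType) (A : algType C) n (u v : nat -> A) (t0 : st n * st n) :
  inspan n u v (mono u v t0).
Proof.
exists (fun t => if t == t0 then 1 else 0).
rewrite (bigD1 t0) //= eqxx scale1r big1 ?addr0 // => t /negbTE ->; by rewrite scale0r.
Qed.

Lemma span_sgn (C : fieldType) (A : algType C) n (u v : nat -> A) b x :
  inspan n u v x -> inspan n u v (sgn b x).
Proof. by case: b => //= h; rewrite -scaleN1r; apply: spanZ. Qed.

Lemma span_sum (C : fieldType) (A : algType C) n (u v : nat -> A) (I : Type) (r : seq I) (P : pred I) (F : I -> A) :
  (forall i, P i -> inspan n u v (F i)) -> inspan n u v (\sum_(i <- r | P i) F i).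
Proof. by move=> H; apply: big_ind => //; [apply: span0 | apply: spanD]. Qed.

Lemma span_uM (C : fieldType) (A : algType C) n (u v : nat -> A) i x : Qrel n u v -> inQ n i ->
  inspan n u v x -> inspan n u v (u i * x).
Proof.
move=> Q hi [c ->]; rewrite mulr_sumr; apply: span_sum => t _.
by rewrite -scalerAr; apply: spanZ; rewrite u_mono //; apply/span_sgn/span_mono.
Qed.

Lemma span_vM (C : fieldType) (A : algType C) n (u v : nat -> A) i x : Qrel n u v -> inQ n i ->
  inspan n u v x -> inspan n u v (v i * x).
Proof.
move=> Q hi [c ->]; rewrite mulr_sumr; apply: span_sum => t _.
by rewrite -scalerAr; apply: spanZ; rewrite v_mono //; apply/span_sgn/span_mono.
Qed.

Lemma span_prodM (C : fieldType) (A : algType C) n (u v : nat -> A) (w : nat -> A) (P : pred nat) x :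
  (forall i y, inQ n i -> inspan n u v y -> inspan n u v (w i * y)) ->
  inspan n u v x -> inspan n u v ((\prod_(1 <= i < n | P i) w i) * x).
Proof.
move=> H; elim: (index_iota 1 n) (@inQ_iota n) x => [|j r IH] hr x hx.
  by rewrite big_nil mul1r.
rewrite big_cons; case: (P j); last by apply: IH => // k kr; apply: hr; rewrite inE kr orbT.
rewrite -mulrA; apply: H; first by apply: hr; rewrite mem_head.
by apply: IH => // k kr; apply: hr; rewrite inE kr orbT.
Qed.

Lemma span_mul (C : fieldType) (A : algType C) n (u v : nat -> A) x y : Qrel n u v ->
  inspan n u v x -> inspan n u v y -> inspan n u v (x * y).
Proof.
move=> Q [c ->] hy; rewrite mulr_suml; apply: span_sum => t _.
rewrite -scalerAl; apply: spanZ; rewrite /mono -mulrA.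
apply: span_prodM; first by move=> i z hi hz; apply: span_uM.
apply: span_prodM => //; by move=> i z hi hz; apply: span_vM.
Qed.

Lemma span1 (C : fieldType) (A : algType C) n (u v : nat -> A) : inspan n u v 1.
Proof.
have -> : (1 : A) = mono u v (zst n, zst n).
  by rewrite /mono /Up /= !big_pred0 ?mulr1 // => i; rewrite get_zst.
exact: span_mono.
Qed.

Definition asb (P : Prop) : bool := if excluded_middle_informative P then true else false.
Lemma asbP P : reflect P (asb P).
Proof. rewrite /asb; case: excluded_middle_informative => h; constructor => //. Qed.

Definition Sp (C : fieldType) (A : algType C) n (u v : nat -> A) : {pred A} :=
  fun x => asb (Qrel n u v -> inspan n u v x).

Lemma Sp_closed (C : fieldType) (A : algType C) n (u v : nat -> A) :
  GRing.subsemialg_closed (Sp n u v).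
Proof.
split.
- by apply/asbP => _; apply: span1.
- split; first by apply/asbP => _; apply: span0.
  by move=> x y /asbP hx /asbP hy; apply/asbP => Q; apply: spanD; [apply: hx | apply: hy].
- by move=> k x /asbP hx; apply/asbP => Q; apply: spanZ; apply: hx.
- by move=> x y /asbP hx /asbP hy; apply/asbP => Q; apply: span_mul => //; [apply: hx | apply: hy].
Qed.

HB.instance Definition _ (C : fieldType) (A : algType C) n (u v : nat -> A) :=
  GRing.isSubalgClosed.Build C A (Sp n u v) (Sp_closed n u v).

Definition SA (C : fieldType) (A : algType C) n (u v : nat -> A) := {x : A | x \in Sp n u v}.
HB.instance Definition _ (C : fieldType) (A : algType C) n (u v : nat -> A) :=
  [isSub for (@sval A _ : SA n u v -> A)].
HB.instance Definition _ (C : fieldType) (A : algType C) n (u v : nat -> A) :=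
  [Choice of SA n u v by <:].
HB.instance Definition _ (C : fieldType) (A : algType C) n (u v : nat -> A) :=
  [SubChoice_isSubAlgebra of SA n u v by <:].

Definition kv (C : fieldType) (A : algType C) n (u v : nat -> A) (h : {lrmorphism A -> SA n u v}) : A -> A :=
  fun x => val (h x).
HB.instance Definition _ (C : fieldType) (A : algType C) n (u v : nat -> A) (h : {lrmorphism A -> SA n u v}) :=
  GRing.RMorphism.copy (kv h) ((val : {rmorphism SA n u v -> A}) \o h).
HB.instance Definition _ (C : fieldType) (A : algType C) n (u v : nat -> A) (h : {lrmorphism A -> SA n u v}) :=
  GRing.Linear.copy (kv h) ((val : {linear SA n u v -> A}) \o h).

Lemma spanning (C : fieldType) n (A : algType C) (u v : nat -> A) :
  is_Qn n u v -> forall x : A, inspan n u v x.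
Proof.
move=> [Q U].
have memu : forall i, inQ n i -> u i \in Sp n u v.
  by move=> i hi; apply/asbP => _; rewrite -[u i]mulr1; apply: span_uM => //; apply: span1.
have memv : forall i, inQ n i -> v i \in Sp n u v.
  by move=> i hi; apply/asbP => _; rewrite -[v i]mulr1; apply: span_vM => //; apply: span1.
pose x i : SA n u v := insubd 1 (u i).
pose y i : SA n u v := insubd 1 (v i).
have xK : forall i, inQ n i -> val (x i) = u i by move=> i hi; rewrite /x insubdK // memu.
have yK : forall i, inQ n i -> val (y i) = v i by move=> i hi; rewrite /y insubdK // memv.
have vM : forall a b : SA n u v, val (a * b) = val a * val b.
  by move=> a b; exact: (rmorphM (val : {rmorphism SA n u v -> A})).
have vN1 : val (-1 : SA n u v) = -1 by exact: (rmorphN1 (val : {rmorphism SA n u v -> A})).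
have vN : forall a : SA n u v, val (- a) = - val a.
  by move=> a; exact: (rmorphN (val : {rmorphism SA n u v -> A})).
have Q' : Qrel n x y.
  case: Q => H1 H2 H4; split.
  - move=> i hi; split; apply: val_inj; rewrite vM vN1 ?xK ?yK //; by case: (H1 i hi).
  - move=> i j hi hj; apply: val_inj; rewrite vM xK // yK // H2 //.
    by case: ifP => _; rewrite ?vN vM xK // yK.
  - move=> i j hi hj; split; apply: val_inj; rewrite !vM ?xK ?yK //; by case: (H4 i j hi hj).
have [[h hgen] uniq] := U _ x y Q'.
have E := (proj2 (U A u v Q)) idfun (kv h).
move=> z; have -> : z = kv h z.
  apply: E => i hi /=; rewrite /kv; case: (hgen i hi) => -> ->; by rewrite xK // yK.
by move: (valP (h z)) => /asbP; apply.
Qed.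

Definition gen (R : pzRingType) (u v : nat -> R) (g : bool * nat) : R := if g.1 then v g.2 else u g.2.
Definition sig n (g : bool * nat) (t : st n * st n) : bool :=
  if g.1 then xorr t.1 g.2 else xorr t.2 g.2.

Lemma gen_mono (R : pzRingType) n (u v : nat -> R) g (t : st n * st n) : Qrel n u v -> inQ n g.2 ->
  gen u v g * mono u v t = sgn (sig g t) (mono u v t * gen u v g).
Proof. by case: g => [[] i] /= Q hi; rewrite /gen /sig /=; [apply: v_mono_c | apply: u_mono_c]. Qed.

Lemma gen_sq (R : pzRingType) n (u v : nat -> R) g : Qrel n u v -> inQ n g.2 ->
  gen u v g * gen u v g = -1.
Proof. by case: g => [[] i] /= Q hi; rewrite /gen /=; case: (Qrel_uu Q) => _ [H1 [_ H2]]; auto. Qed.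

Lemma proj_step (C : numFieldType) (A : algType C) n (u v : nat -> A) g (c : st n * st n -> C) z :
  Qrel n u v -> inQ n g.2 -> central z ->
  z = \sum_(t : st n * st n) c t *: mono u v t ->
  z = \sum_(t : st n * st n) (if sig g t then 0 else c t) *: mono u v t.
Proof.
move=> Q hi cz Ez.
set T := \sum_(t : st n * st n) (if sig g t then 0 else c t) *: mono u v t.
have E1 : z - gen u v g * z * gen u v g = z + z.
  by rewrite -cz -mulrA (gen_sq Q hi) mulrN1 opprK.
have E2 : z - gen u v g * z * gen u v g = T + T.
  rewrite {1 2}Ez mulr_sumr mulr_suml -sumrB -big_split /=; apply: eq_bigr => t _.
  rewrite -scalerAr -scalerAl (gen_mono _ Q hi) sgnMl -mulrA (gen_sq Q hi) mulrN1 -scalerBr -scalerDr.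
  by case: (sig g t) => /=; rewrite ?opprK ?subrr ?scale0r ?scaler0 // opprK.
have : z *+ 2 = T *+ 2 by rewrite !mulr2n -E1 E2.
move=> /(congr1 (fun w => (2%:R)^-1 *: w)); rewrite -!scaler_nat !scalerA mulVf ?scale1r //.
by rewrite pnatr_eq0.
Qed.

Lemma proj_list (C : numFieldType) (A : algType C) n (u v : nat -> A) (L : seq (bool * nat)) (c : st n * st n -> C) z :
  Qrel n u v -> (forall g, g \in L -> inQ n g.2) -> central z ->
  z = \sum_(t : st n * st n) c t *: mono u v t ->
  z = \sum_(t : st n * st n) (if has (fun g => sig g t) L then 0 else c t) *: mono u v t.
Proof.
move=> Q; elim: L => [|g L IH] hL cz Ez.
  by rewrite Ez; apply: eq_bigr => t _.
have hL' : forall g', g' \in L -> inQ n g'.2 by move=> g' gL; apply: hL; rewrite inE gL orbT.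
have Ez' := IH hL' cz Ez.
rewrite (proj_step Q (hL g (mem_head g L)) cz Ez').
by apply: eq_bigr => t _ /=; case: (sig g t).
Qed.

Definition gensL n : seq (bool * nat) :=
  [seq (false, i) | i <- index_iota 1 n] ++ [seq (true, i) | i <- index_iota 1 n].

Lemma gensL_inQ n g : g \in gensL n -> inQ n g.2.
Proof.
rewrite mem_cat => /orP[] /mapP[i ii ->]; by apply: inQ_iota.
Qed.

Lemma has_gens n (t : st n * st n) : ~~ has (fun g => sig g t) (gensL n) ->
  (forall i, inQ n i -> xorr t.1 i = false) /\ (forall i, inQ n i -> xorr t.2 i = false).
Proof.
move=> /hasPn H; split => i hi.
  apply/negbTE; apply: (H (true, i)); rewrite mem_cat; apply/orP; right.
  by apply/mapP; exists i => //; rewrite mem_index_iota.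
apply/negbTE; apply: (H (false, i)); rewrite mem_cat; apply/orP; left.
by apply/mapP; exists i => //; rewrite mem_index_iota.
Qed.

Lemma mono_rad (R : pzRingType) n (u v : nat -> R) (t : st n * st n) : (2 <= n)%N ->
  ~~ has (fun g => sig g t) (gensL n) ->
  [/\ mono u v t = (if get t.1 1%N then Uprod n u else 1) * (if get t.2 1%N then Uprod n v else 1),
      get t.1 1%N -> (3 %| n)%N & get t.2 1%N -> (3 %| n)%N].
Proof.
move=> n2 /has_gens [H1 H2].
have [P1 D1] := rad_state n2 H1; have [P2 D2] := rad_state n2 H2.
by split => //; rewrite /mono !Up_pat.
Qed.

Lemma central_proj (C : numFieldType) n (A : algType C) (u v : nat -> A) (z : A) :
  is_Qn n u v -> central z ->
  exists d : st n * st n -> C,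
    z = \sum_(t : st n * st n) (if has (fun g => sig g t) (gensL n) then 0 else d t) *: mono u v t.
Proof.
move=> hQ cz; have [c Ez] := spanning hQ z.
exists c; apply: proj_list => //; first by case: hQ.
by move=> g /gensL_inQ.
Qed.

Lemma center_not3 (C : numFieldType) n (A : algType C) (u v : nat -> A) (z : A) :
  (2 <= n)%N -> is_Qn n u v -> ~~ (3 %| n)%N -> central z -> exists c : C, z = c%:A.
Proof.
move=> n2 hQ n3 cz; have [d ->] := central_proj hQ cz.
apply: (big_ind (fun w : A => exists c : C, w = c%:A)) => [|x y [a ->] [b ->]|t _]; first by exists 0; rewrite scale0r.
  by exists (a + b); rewrite scalerDl.
case: ifP => hs; first by exists 0; rewrite !scale0r.
have [-> D1 D2] := mono_rad u v n2 (negbT hs).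
exists (d t); case: (get t.1 1%N) D1; first by move=> /(_ isT); rewrite (negbTE n3).
case: (get t.2 1%N) D2; first by move=> /(_ isT); rewrite (negbTE n3).
by rewrite mulr1.
Qed.

Definition comb (C : fieldType) (A : algType C) (U V : A) (a b c d : C) : A :=
  a%:A + b *: U + c *: V + d *: (U * V).

Lemma comb_add (C : fieldType) (A : algType C) (U V : A) a b c d a' b' c' d' :
  comb U V a b c d + comb U V a' b' c' d' = comb U V (a + a') (b + b') (c + c') (d + d').
Proof. by rewrite /comb !scalerDl [LHS]addrACA [X in X + _]addrACA [X in X + _ + _]addrACA. Qed.

Lemma center_3 (C : numFieldType) n (A : algType C) (u v : nat -> A) (z : A) :
  (2 <= n)%N -> is_Qn n u v -> central z ->
  exists a b c d : C, z = comb (Uprod n u) (Uprod n v) a b c d.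
Proof.
move=> n2 hQ cz; have [d ->] := central_proj hQ cz.
apply: (big_ind (fun w : A => exists a b c d : C, w = comb (Uprod n u) (Uprod n v) a b c d)) => [|x y [a [b [c [e ->]]]] [a' [b' [c' [e' ->]]]]|t _].
- by exists 0, 0, 0, 0; rewrite /comb !scale0r !addr0.
- by exists (a + a'), (b + b'), (c + c'), (e + e'); rewrite comb_add.
case: ifP => hs; first by exists 0, 0, 0, 0; rewrite /comb !scale0r !addr0.
have [-> _ _] := mono_rad u v n2 (negbT hs).
rewrite /comb; case: (get t.1 1%N); case: (get t.2 1%N); rewrite ?mul1r ?mulr1.
- by exists 0, 0, 0, (d t); rewrite !scale0r !add0r.
- by exists 0, (d t), 0, 0; rewrite !scale0r add0r !addr0.
- by exists 0, 0, (d t), 0; rewrite !scale0r add0r addr0 add0r.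
- by exists (d t), 0, 0, 0; rewrite !scale0r !addr0.
Qed.

Lemma central_gen (C : fieldType) n (A : algType C) (u v : nat -> A) (w : A) :
  is_Qn n u v -> (forall i, inQ n i -> w * u i = u i * w /\ w * v i = v i * w) -> central w.
Proof.
move=> hQ H x; have [c ->] := spanning hQ x.
rewrite mulr_sumr mulr_suml; apply: eq_bigr => t _; rewrite -scalerAr -scalerAl; congr (_ *: _).
have cp : forall (F : nat -> A) (a : st n), (forall i, inQ n i -> w * F i = F i * w) -> w * Up F a = Up F a * w.
  move=> F a HF; rewrite /Up big_seq_cond; apply: commr_prod => i /andP[ir _].
  by apply: HF; apply: inQ_iota.
rewrite /mono mulrA cp; last by move=> i hi; case: (H i hi).
by rewrite -mulrA cp ?mulrA // => i hi; case: (H i hi).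
Qed.

Lemma central_add (R : pzRingType) (x y : R) : central x -> central y -> central (x + y).
Proof. by move=> hx hy a; rewrite mulrDl mulrDr hx hy. Qed.
Lemma central_mul (R : pzRingType) (x y : R) : central x -> central y -> central (x * y).
Proof. by move=> hx hy a; rewrite -mulrA hy mulrA hx mulrA. Qed.
Lemma central_scale (C : fieldType) (A : algType C) (k : C) (x : A) : central x -> central (k *: x).
Proof. by move=> hx a; rewrite -scalerAl hx scalerAr. Qed.
Lemma central_1 (R : pzRingType) : central (1 : R).
Proof. by move=> a; rewrite mul1r mulr1. Qed.

Lemma central_U (C : fieldType) n (A : algType C) (u v : nat -> A) :
  is_Qn n u v -> (3 %| n)%N -> central (Uprod n u) /\ central (Uprod n v).
Proof.
move=> hQ d3; have Q := proj1 hQ.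
split; apply: (central_gen hQ) => i hi; rewrite -Up_aU; split.
- by rewrite (u_Up _ Q hi).
- by rewrite (v_Up _ Q hi) xorr_aU.
- by rewrite (u_Vp _ Q hi) xorr_aU.
- by rewrite (v_Vp _ Q hi).
Qed.

Lemma card_pos (T : finType) (x : T) : (0 < #|T|)%N.
Proof. by apply/card_gt0P; exists x. Qed.

Definition ev (T : finType) (x0 : T) (k : 'I_#|T|.-1.+1) : T :=
  enum_val (cast_ord (prednK (card_pos x0)) k).
Definition rk (T : finType) (x0 : T) (y : T) : 'I_#|T|.-1.+1 :=
  cast_ord (esym (prednK (card_pos x0))) (enum_rank y).

Lemma rkK (T : finType) (x0 : T) y : ev x0 (rk x0 y) = y.
Proof. by rewrite /ev /rk cast_ordKV enum_rankK. Qed.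
Lemma evK (T : finType) (x0 : T) k : rk x0 (ev x0 k) = k.
Proof. by rewrite /ev /rk enum_valK cast_ordK. Qed.
Lemma ev_inj (T : finType) (x0 : T) : injective (ev x0).
Proof. by move=> i j E; rewrite -(evK x0 i) E evK. Qed.

Definition mm (C : fieldType) (T : finType) (x0 : T) (p : T -> T) (s : T -> C) : 'M[C]_#|T|.-1.+1 :=
  \matrix_(i, j) if ev x0 i == p (ev x0 j) then s (ev x0 j) else 0.

Lemma mm_ext (C : fieldType) (T : finType) (x0 : T) p p' (s s' : T -> C) :
  (forall y, p y = p' y) -> (forall y, s y = s' y) -> mm x0 p s = mm x0 p' s'.
Proof. by move=> Hp Hs; apply/matrixP => i j; rewrite !mxE Hp Hs. Qed.

Lemma mm_mul (C : fieldType) (T : finType) (x0 : T) p q (s t : T -> C) :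
  mm x0 p s * mm x0 q t = mm x0 (fun y => p (q y)) (fun y => s (q y) * t y).
Proof.
apply/matrixP => i j; rewrite !mxE (bigD1 (rk x0 (q (ev x0 j)))) //= !mxE rkK eqxx.
rewrite big1 ?addr0; first by case: eqP => _; rewrite ?mul0r.
move=> k hk; rewrite !mxE; case: (eqVneq (ev x0 k) (q (ev x0 j))) => [E|_]; last by rewrite mulr0.
by move: hk; rewrite -E evK eqxx.
Qed.

Lemma mm1 (C : fieldType) (T : finType) (x0 : T) : mm x0 id (fun _ => 1 : C) = 1.
Proof.
apply/matrixP => i j; rewrite !mxE.
by rewrite (inj_eq (@ev_inj _ x0)); case: eqP.
Qed.

Lemma mmN (C : fieldType) (T : finType) (x0 : T) p (s : T -> C) :
  - mm x0 p s = mm x0 p (fun y => - s y).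
Proof. by apply/matrixP => i j; rewrite !mxE; case: eqP; rewrite ?oppr0. Qed.

Lemma mmE (C : fieldType) (T : finType) (x0 : T) p (s : T -> C) y y' :
  mm x0 p s (rk x0 y') (rk x0 y) = if y' == p y then s y else 0.
Proof. by rewrite mxE !rkK. Qed.

Definition nb n (a : st n) (i : nat) : bool := get a i.-1 (+) get a i (+) get a i.+1.

Lemma nb_flip n (a : st n) i j : inQ n i -> inQ n j -> nb (flip a j) i = nb a i (+) near i j.
Proof.
move=> /andP[i1 _] /andP[_ jn]; rewrite /nb !get_flip // near_split //.
rewrite !(eq_sym j).
by case: (get a i.-1); case: (get a i); case: (get a i.+1); case: (i.-1 == j); case: (i == j); case: (i.+1 == j).
Qed.

Lemma flipK n (a : st n) i : (i < n)%N -> flip (flip a i) i = a.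
Proof. by move=> iln; apply: st_eq => k; rewrite !get_flip // -addbA addbb addbF. Qed.

Lemma flipC n (a : st n) i j : (i < n)%N -> (j < n)%N -> flip (flip a i) j = flip (flip a j) i.
Proof. by move=> hi hj; apply: st_eq => k; rewrite !get_flip // addbAC. Qed.

Definition x0st n : st n * st n := (zst n, zst n).

Definition Xm (C : fieldType) n (i : nat) : 'M[C]_#|{: st n * st n}|.-1.+1 :=
  mm (x0st n) (fun y => (flip y.1 i, y.2)) (fun y => (-1) ^+ get y.1 i).
Definition Ym (C : fieldType) n (i : nat) : 'M[C]_#|{: st n * st n}|.-1.+1 :=
  mm (x0st n) (fun y => (y.1, flip y.2 i)) (fun y => (-1) ^+ (nb y.1 i (+) get y.2 i)).

Lemma mmm1 (C : fieldType) (T : finType) (x0 : T) : mm x0 id (fun _ => -1 : C) = -1.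
Proof. by rewrite -(mm1 C x0) mmN. Qed.


Lemma sgn_h1 (C : fieldType) (x y z : bool) :
  (-1)^+x * (-1)^+(y (+) z) = -((-1)^+(y (+) true (+) z) * (-1)^+x) :> C.
Proof.
by case: x; case: y; case: z; rewrite /= ?expr0 ?expr1 ?mulN1r ?mulr1 ?mul1r ?opprK ?mulrN1.
Qed.
Lemma sgn_h0 (C : fieldType) (x y z : bool) :
  (-1)^+x * (-1)^+(y (+) z) = ((-1)^+(y (+) false (+) z) * (-1)^+x) :> C.
Proof. by rewrite addbF mulrC. Qed.

Lemma sgn_h2 (C : fieldType) (x y e : bool) :
  (-1)^+(x (+) e) * (-1)^+ y = (-1)^+(y (+) e) * (-1)^+ x :> C.
Proof. by case: x; case: y; case: e; rewrite /= ?expr0 ?expr1 ?mulN1r ?mulr1 ?mul1r ?opprK ?mulrN1. Qed.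
Lemma sgn_h3 (C : fieldType) (p q r s e : bool) :
  (-1)^+(p (+) (q (+) e)) * (-1)^+(r (+) s) = (-1)^+(r (+) (s (+) e)) * (-1)^+(p (+) q) :> C.
Proof. by case: p; case: q; case: r; case: s; case: e; rewrite /= ?expr0 ?expr1 ?mulN1r ?mulr1 ?mul1r ?opprK ?mulrN1. Qed.

Lemma model_Qrel (C : fieldType) n : Qrel n (@Xm C n) (@Ym C n).
Proof.
split.
- move=> i /andP[_ iln]; split; rewrite /Xm /Ym mm_mul -(mmm1 C (x0st n)); apply: mm_ext => -[a b] /=;
    rewrite ?flipK // ?get_flip // ?eqxx.
  + by case: (get a i); rewrite /= ?expr0 ?expr1 ?mulN1r ?mul1r ?opprK.
  + by case: (nb a i); case: (get b i); rewrite /= ?expr0 ?expr1 ?mulN1r ?mul1r ?opprK.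
- move=> i j hi hj; rewrite /Xm /Ym !mm_mul.
  case: ifP => hn; rewrite ?mmN; apply: mm_ext => -[a b] /=; try reflexivity.
  + rewrite (nb_flip _ hj hi) nearC /near hn; exact: sgn_h1.
  + rewrite (nb_flip _ hj hi) nearC /near hn; exact: sgn_h0.
- move=> i j /andP[_ hi] /andP[_ hj]; split; rewrite /Xm /Ym !mm_mul; apply: mm_ext => -[a b] /=;
    rewrite ?(flipC _ hi hj); try reflexivity.
  + by rewrite !get_flip // (eq_sym j) sgn_h2.
  + by rewrite !get_flip // (eq_sym j) sgn_h3.
Qed.

Definition fl n (L : seq nat) (a : st n) : st n := foldr (fun i acc => flip acc i) a L.

Lemma get_fl n (L : seq nat) (a : st n) k : uniq L -> all (fun i => i < n)%N L ->
  get (fl L a) k = get a k (+) (k \in L).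
Proof.
elim: L => [|i L IH] /=; first by rewrite addbF.
move=> /andP[iL uL] /andP[iln aL]; rewrite get_flip // IH // inE.
case: eqP => [->|] /=; last by rewrite addbF.
by rewrite (negbTE iL) addbF.
Qed.

Lemma prodX (C : fieldType) n (r : seq nat) (P : pred nat) :
  exists s : st n * st n -> C, (forall y, s y != 0) /\
   \prod_(i <- r | P i) Xm C n i = mm (x0st n) (fun y => (fl [seq i <- r | P i] y.1, y.2)) s.
Proof.
elim: r => [|i r [s [s0 E]]].
  exists (fun _ => 1); split; first by move=> _; apply: oner_neq0.
  by rewrite big_nil -(mm1 C (x0st n)); apply: mm_ext => -[].
rewrite big_cons /=; case: (P i); last by exists s.
exists (fun y => (-1) ^+ get (fl [seq i <- r | P i] y.1) i * s y); split.
  by move=> y; rewrite mulf_neq0 // signr_eq0.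
by rewrite E /Xm mm_mul.
Qed.

Lemma prodY (C : fieldType) n (r : seq nat) (P : pred nat) :
  exists s : st n * st n -> C, (forall y, s y != 0) /\
   \prod_(i <- r | P i) Ym C n i = mm (x0st n) (fun y => (y.1, fl [seq i <- r | P i] y.2)) s.
Proof.
elim: r => [|i r [s [s0 E]]].
  exists (fun _ => 1); split; first by move=> _; apply: oner_neq0.
  by rewrite big_nil -(mm1 C (x0st n)); apply: mm_ext => -[].
rewrite big_cons /=; case: (P i); last by exists s.
exists (fun y => (-1) ^+ (nb y.1 i (+) get (fl [seq i <- r | P i] y.2) i) * s y); split.
  by move=> y; rewrite mulf_neq0 // signr_eq0.
by rewrite E /Ym mm_mul.
Qed.

Lemma indep (C : fieldType) n (A : algType C) (u v : nat -> A) (a b c d : C) :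
  (2 <= n)%N -> is_Qn n u v -> comb (Uprod n u) (Uprod n v) a b c d = 0 ->
  [/\ a = 0, b = 0, c = 0 & d = 0].
Proof.
move=> n2 [_ U] E.
have [[h hgen] _] := U _ (@Xm C n) (@Ym C n) (model_Qrel C n).
set L := [seq i <- index_iota 1 n | ~~ (3 %| i)%N].
have [sU [sU0 EU]] := prodX C n (index_iota 1 n) (fun i => ~~ (3 %| i)%N).
have [sV [sV0 EV]] := prodY C n (index_iota 1 n) (fun i => ~~ (3 %| i)%N).
have hU : h (Uprod n u) = \prod_(1 <= i < n | ~~ (3 %| i)%N) Xm C n i.
  rewrite rmorph_prod [LHS]big_seq_cond [RHS]big_seq_cond; apply: eq_bigr => i /andP[/inQ_iota hi _].
  by case: (hgen i hi).
have hV : h (Uprod n v) = \prod_(1 <= i < n | ~~ (3 %| i)%N) Ym C n i.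
  rewrite rmorph_prod [LHS]big_seq_cond [RHS]big_seq_cond; apply: eq_bigr => i /andP[/inQ_iota hi _].
  by case: (hgen i hi).
have hcomb : h (comb (Uprod n u) (Uprod n v) a b c d) =
    a *: 1 + b *: h (Uprod n u) + c *: h (Uprod n v) + d *: (h (Uprod n u) * h (Uprod n v)).
  rewrite /comb !raddfD; congr (_ + _ + _ + _).
  - by move: (linearZZ h a 1); rewrite rmorph1.
  - exact: linearZZ.
  - exact: linearZZ.
  - by move: (linearZZ h d (Uprod n u * Uprod n v)); rewrite rmorphM.
have := congr1 h E; rewrite raddf0 hcomb hU hV EU EV mm_mul.
rewrite -(mm1 C (x0st n)) -/L.
set aL := fl L (zst n).
have aL1 : get aL 1%N = true.
  rewrite /aL get_fl ?get_zst /L ?mem_filter ?mem_index_iota ?n2 //.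
    by rewrite filter_uniq // /index_iota iota_uniq.
  by apply/allP => i; rewrite mem_filter mem_index_iota => /and3P[].
have aLz : (aL == zst n) = false by apply/negbTE/eqP => E'; move: aL1; rewrite E' get_zst.
move=> E2.
have ent := fun y' => congr1 (fun M : 'M[C]_#|{: st n * st n}|.-1.+1 => M (rk (x0st n) y') (rk (x0st n) (x0st n))) E2.
have aLz' : (zst n == aL) = false by rewrite eq_sym aLz.
have e1 := ent (x0st n); rewrite /= !mxE !rkK /= -/aL /x0st !xpair_eqE ?eqxx ?aLz ?aLz' /= in e1.
have e2 := ent (aL, zst n); rewrite /= !mxE !rkK /= -/aL /x0st !xpair_eqE ?eqxx ?aLz ?aLz' /= in e2.
have e3 := ent (zst n, aL); rewrite /= !mxE !rkK /= -/aL /x0st !xpair_eqE ?eqxx ?aLz ?aLz' /= in e3.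
have e4 := ent (aL, aL); rewrite /= !mxE !rkK /= -/aL /x0st !xpair_eqE ?eqxx ?aLz ?aLz' /= in e4.
move: e1 e2 e3 e4; rewrite !mulr0 !mulr1 !addr0 !add0r => ->.
move=> /eqP; rewrite mulf_eq0 (negbTE (sU0 _)) orbF => /eqP ->.
move=> /eqP; rewrite mulf_eq0 (negbTE (sV0 _)) orbF => /eqP ->.
move=> /eqP; rewrite mulf_eq0 mulf_eq0 (negbTE (sV0 _)) (negbTE (sU0 _)) !orbF => /eqP ->.
by [].
Qed.

Unset Implicit Arguments.

Theorem mainTheorem6 (C : numClosedFieldType) (n : nat) (A : algType C)
    (u v : nat -> A) :
  (2 <= n)%N -> is_Qn n u v ->
  (~~ (3 %| n)%N ->
     forall z : A, central z <-> exists c : C, z = c%:A) /\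
  ((3 %| n)%N ->
     (forall z : A, central z <->
        exists a b c d : C,
          z = a%:A + b *: Uprod n u + c *: Uprod n v
              + d *: (Uprod n u * Uprod n v)) /\
     (forall a b c d : C,
        a%:A + b *: Uprod n u + c *: Uprod n v
          + d *: (Uprod n u * Uprod n v) = 0 ->
        [/\ a = 0, b = 0, c = 0 & d = 0])).
Proof.
move=> n2 hQ; split.
  move=> n3 z; split; first by move=> cz; exact: (center_not3 n2 hQ n3 cz).
  by move=> [c ->]; apply/central_scale/central_1.
move=> d3; have [cU cV] := central_U hQ d3; split.
  move=> z; split.
    move=> cz; have [a [b [c [d E]]]] := center_3 n2 hQ cz.
    by exists a, b, c, d; exact: E.
  move=> [a [b [c [d ->]]]].
  apply: central_add; last by apply/central_scale/central_mul.
  apply: central_add; last by apply/central_scale.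
  apply: central_add; last by apply/central_scale.
  by apply/central_scale/central_1.
move=> a b c d E; exact: (indep n2 hQ E).
Qed.
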